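(* Let $\{\triangleright\} \subseteq \sigma \subseteq \{\triangleright, ;, \wedge, \mathrm{upd}, \sqcup, \mathsf{D}, \mathsf{A}\}$. The class of $\sigma$-algebras that have a meet-complete representation by partial functions is not axiomatisable by any existential-universal-existential first-order theory.
   Context: The operations are interpreted on partial functions on a base set $X$ as: $f \triangleright g = \{(x,y) \in g : x \notin \mathrm{dom}(f)\}$ (antidomain restriction); $f;g = \{(x,z):\exists y\,((x,y)\in f,(y,z)\in g)\}$ (composition); $f\wedge g = f\cap g$; $\mathrm{upd}(f,g)(x)$ is $f(x)$ if $f(x)$ defined and $g(x)$ undefined, $g(x)$ if both defined, undefined otherwise (update); $(f\sqcup g)(x)$ is $f(x)$ if defined, else $g(x)$ (preferential union); $\mathsf{D}(f)$ = identity on $\mathrm{dom}(f)$; $\mathsf{A}(f)$ = identity on $X\setminus\mathrm{dom}(f)$. A representation by partial functions is an isomorphism onto a $\sigma$-algebra of partial functions with these operations. Define $0 := a\triangleright a$, $a\lhd b := (a\triangleright b)\triangleright b$, $a \le b :\iff a\lhd b = a$; for representable algebras this is a partial order and $a\le b\iff\theta(a)\subseteq\theta(b)$. A representation $\theta$ is meet complete if for every nonempty $S$ with $\bigwedge S$ existing in $(\mathcal{A},\le)$, $\theta(\bigwedge S)=\bigcap\theta[S]$. *)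

(* Defs.v *)
From Stdlib Require Import List.

Inductive binop : Type :=
  | Antidom   (* f ▷ g : antidomain restriction *)
  | Comp
  | Meet
  | Upd
  | Pref.     (* f ⊔ g : preferential union *)

Inductive unop : Type :=
  | Dom
  | Antid.

Record signature : Type := Sig {
  sig_bin : binop -> bool;
  sig_un  : unop -> bool }.

(* A structure interpreting the symbols; for a signature σ only the symbols
   of σ are ever used (by formulas and representations), so a σ-algebra is
   such a structure up to the irrelevant interpretation of symbols outside σ. *)
Record algebra : Type := Alg {
  carrier :> Type;
  bin : binop -> carrier -> carrier -> carrier;
  un  : unop -> carrier -> carrier }.

Inductive term : Type :=
  | Var : nat -> term
  | TBin : binop -> term -> term -> term
  | TUn : unop -> term -> term.

Inductive formula : Type :=
  | FEq : term -> term -> formula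
  | FFalse : formula
  | FNot : formula -> formula
  | FAnd : formula -> formula -> formula
  | FOr : formula -> formula -> formula
  | FImp : formula -> formula -> formula
  | FEx : nat -> formula -> formula
  | FAll : nat -> formula -> formula.

Fixpoint term_in_sig (s : signature) (t : term) : Prop :=
  match t with
  | Var _ => True
  | TBin b t1 t2 => sig_bin s b = true /\ term_in_sig s t1 /\ term_in_sig s t2
  | TUn u t1 => sig_un s u = true /\ term_in_sig s t1
  end.

Fixpoint formula_in_sig (s : signature) (f : formula) : Prop :=
  match f with
  | FEq t1 t2 => term_in_sig s t1 /\ term_in_sig s t2
  | FFalse => True
  | FNot g => formula_in_sig s g
  | FAnd g h | FOr g h | FImp g h => formula_in_sig s g /\ formula_in_sig s h
  | FEx _ g | FAll _ g => formula_in_sig s g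
  end.

Fixpoint term_has_var (n : nat) (t : term) : Prop :=
  match t with
  | Var m => m = n
  | TBin _ t1 t2 => term_has_var n t1 \/ term_has_var n t2
  | TUn _ t1 => term_has_var n t1
  end.

Fixpoint free_in (n : nat) (f : formula) : Prop :=
  match f with
  | FEq t1 t2 => term_has_var n t1 \/ term_has_var n t2
  | FFalse => False
  | FNot g => free_in n g
  | FAnd g h | FOr g h | FImp g h => free_in n g \/ free_in n h
  | FEx m g | FAll m g => m <> n /\ free_in n g
  end.

Definition sentence (f : formula) : Prop := forall n, ~ free_in n f.

Fixpoint quantifier_free (f : formula) : Prop :=
  match f with
  | FEq _ _ | FFalse => True
  | FNot g => quantifier_free g
  | FAnd g h | FOr g h | FImp g h => quantifier_free g /\ quantifier_free h
  | FEx _ _ | FAll _ _ => False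
  end.

Inductive is_E : formula -> Prop :=
  | E_qf : forall f, quantifier_free f -> is_E f
  | E_ex : forall n f, is_E f -> is_E (FEx n f).

Inductive is_AE : formula -> Prop :=
  | AE_E : forall f, is_E f -> is_AE f
  | AE_all : forall n f, is_AE f -> is_AE (FAll n f).

Inductive is_EAE : formula -> Prop :=
  | EAE_AE : forall f, is_AE f -> is_EAE f
  | EAE_ex : forall n f, is_EAE f -> is_EAE (FEx n f).

Definition update {A : Type} (v : nat -> A) (n : nat) (a : A) : nat -> A :=
  fun m => if Nat.eqb m n then a else v m.

Fixpoint eval_term (M : algebra) (v : nat -> M) (t : term) : M :=
  match t with
  | Var n => v n
  | TBin b t1 t2 => bin M b (eval_term M v t1) (eval_term M v t2)
  | TUn u t1 => un M u (eval_term M v t1)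
  end.

Fixpoint sat (M : algebra) (v : nat -> M) (f : formula) : Prop :=
  match f with
  | FEq t1 t2 => eval_term M v t1 = eval_term M v t2
  | FFalse => False
  | FNot g => ~ sat M v g
  | FAnd g h => sat M v g /\ sat M v h
  | FOr g h => sat M v g \/ sat M v h
  | FImp g h => sat M v g -> sat M v h
  | FEx n g => exists a : M, sat M (update v n a) g
  | FAll n g => forall a : M, sat M (update v n a) g
  end.

Definition models (M : algebra) (f : formula) : Prop :=
  forall v : nat -> M, sat M v f.

Definition prel (X : Type) := X -> X -> Prop.

Definition functional {X : Type} (f : prel X) : Prop :=
  forall x y z, f x y -> f x z -> y = z.

Definition rel_eq {X : Type} (f g : prel X) : Prop :=
  forall x y, f x y <-> g x y.

Definition in_dom {X : Type} (f : prel X) (x : X) : Prop := exists y, f x y.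

Definition pf_bin {X : Type} (b : binop) (f g : prel X) : prel X :=
  match b with
  | Antidom => fun x y => g x y /\ ~ in_dom f x
  | Comp => fun x z => exists y, f x y /\ g y z
  | Meet => fun x y => f x y /\ g x y
  | Upd => fun x y => (f x y /\ ~ in_dom g x) \/ (g x y /\ in_dom f x)
  | Pref => fun x y => f x y \/ (g x y /\ ~ in_dom f x)
  end.

Definition pf_un {X : Type} (u : unop) (f : prel X) : prel X :=
  match u with
  | Dom => fun x y => x = y /\ in_dom f x
  | Antid => fun x y => x = y /\ ~ in_dom f x
  end.

Definition representation (s : signature) (M : algebra) (X : Type)
    (theta : M -> prel X) : Prop :=
  (forall a, functional (theta a)) /\
  (forall a b, rel_eq (theta a) (theta b) -> a = b) /\
  (forall o a b, sig_bin s o = true ->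
       rel_eq (theta (bin M o a b)) (pf_bin o (theta a) (theta b))) /\
  (forall o a, sig_un s o = true ->
       rel_eq (theta (un M o a)) (pf_un o (theta a))).

(* derived order: a ◁ b := (a ▷ b) ▷ b ; a ≤ b iff a ◁ b = a *)
Definition alg_le (M : algebra) (a b : M) : Prop :=
  bin M Antidom (bin M Antidom a b) b = a.

Definition is_glb (M : algebra) (S : M -> Prop) (m : M) : Prop :=
  (forall s, S s -> alg_le M m s) /\
  (forall l, (forall s, S s -> alg_le M l s) -> alg_le M l m).

Definition meet_complete (M : algebra) (X : Type) (theta : M -> prel X) : Prop :=
  forall (S : M -> Prop) (m : M), (exists s, S s) -> is_glb M S m ->
    forall x y, theta m x y <-> (forall s, S s -> theta s x y).

Definition has_meet_complete_rep (s : signature) (M : algebra) : Prop :=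
  exists (X : Type) (theta : M -> prel X),
    representation s M X theta /\ meet_complete M X theta.

(* Main.v *)
Require Import Defs.
From Stdlib Require Import List Arith Lia PeanoNat.
From Stdlib Require Import ProofIrrelevance FunctionalExtensionality PropExtensionality Classical.

Fixpoint tbound (t : term) : nat :=
  match t with
  | Var n => S n
  | TBin _ a b => Nat.max (tbound a) (tbound b)
  | TUn _ a => tbound a
  end.

Fixpoint fbound (f : formula) : nat :=
  match f with
  | FEq a b => Nat.max (tbound a) (tbound b)
  | FFalse => 0
  | FNot g => fbound g
  | FAnd g h | FOr g h | FImp g h => Nat.max (fbound g) (fbound h)
  | FEx n g | FAll n g => Nat.max (S n) (fbound g)
  end.

Lemma tvar_bound : forall t j, term_has_var j t -> j < tbound t.
Proof.
  induction t; simpl; intros j H.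
  - subst; lia.
  - destruct H as [H|H]; [apply IHt1 in H | apply IHt2 in H]; lia.
  - apply IHt; auto.
Qed.

Lemma free_bound : forall f j, free_in j f -> j < fbound f.
Proof.
  induction f; cbn [free_in fbound]; intros j H.
  - destruct H as [H|H]; apply tvar_bound in H; lia.
  - destruct H.
  - apply IHf; exact H.
  - destruct H as [H|H]; [apply IHf1 in H | apply IHf2 in H]; lia.
  - destruct H as [H|H]; [apply IHf1 in H | apply IHf2 in H]; lia.
  - destruct H as [H|H]; [apply IHf1 in H | apply IHf2 in H]; lia.
  - destruct H as [_ H]; apply IHf in H; lia.
  - destruct H as [_ H]; apply IHf in H; lia.
Qed.

Lemma eval_agree (M : algebra) : forall t v w,
  (forall j, term_has_var j t -> v j = w j) -> eval_term M v t = eval_term M w t.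
Proof.
  induction t; simpl; intros v w H.
  - apply H; reflexivity.
  - rewrite (IHt1 v w (fun j Hj => H j (or_introl Hj))).
    rewrite (IHt2 v w (fun j Hj => H j (or_intror Hj))). reflexivity.
  - rewrite (IHt v w H). reflexivity.
Qed.

Lemma sat_agree (M : algebra) : forall f v w,
  (forall j, free_in j f -> v j = w j) -> (sat M v f <-> sat M w f).
Proof.
  induction f; simpl; intros v w H.
  - rewrite (eval_agree M t v w (fun j Hj => H j (or_introl Hj))).
    rewrite (eval_agree M t0 v w (fun j Hj => H j (or_intror Hj))). tauto.
  - tauto.
  - assert (A := IHf v w H); tauto.
  - assert (A := IHf1 v w (fun j Hj => H j (or_introl Hj)));
    assert (B := IHf2 v w (fun j Hj => H j (or_intror Hj))); tauto.
  - assert (A := IHf1 v w (fun j Hj => H j (or_introl Hj)));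
    assert (B := IHf2 v w (fun j Hj => H j (or_intror Hj))); tauto.
  - assert (A := IHf1 v w (fun j Hj => H j (or_introl Hj)));
    assert (B := IHf2 v w (fun j Hj => H j (or_intror Hj))); tauto.
  - assert (K : forall a, sat M (update v n a) f <-> sat M (update w n a) f).
    { intro a; apply IHf; intros j Hj; unfold update.
      destruct (Nat.eqb_spec j n) as [->|Hne]; [reflexivity|].
      apply H; split; [intro E; subst; apply Hne; reflexivity | exact Hj]. }
    split; intros [a Ha]; exists a; apply K; exact Ha.
  - assert (K : forall a, sat M (update v n a) f <-> sat M (update w n a) f).
    { intro a; apply IHf; intros j Hj; unfold update.
      destruct (Nat.eqb_spec j n) as [->|Hne]; [reflexivity|].
      apply H; split; [intro E; subst; apply Hne; reflexivity | exact Hj]. }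
    split; intros Ha a; apply K; apply Ha.
Qed.

Definition emb (M N : algebra) (k : M -> N) : Prop :=
  (forall a b, k a = k b -> a = b) /\
  (forall o a b, k (bin M o a b) = bin N o (k a) (k b)) /\
  (forall o a, k (un M o a) = un N o (k a)).

Lemma eval_emb (M N : algebra) (k : M -> N) v t :
  emb M N k -> eval_term N (fun j => k (v j)) t = k (eval_term M v t).
Proof.
  intros [Hi [Hb Hu]]; induction t; simpl.
  - reflexivity.
  - rewrite IHt1, IHt2, Hb; reflexivity.
  - rewrite IHt, Hu; reflexivity.
Qed.

Lemma qf_emb (M N : algebra) (k : M -> N) : emb M N k ->
  forall f, quantifier_free f -> forall v, (sat N (fun j => k (v j)) f <-> sat M v f).
Proof.
  intros He f; induction f; simpl; intros Hq v.
  - rewrite (eval_emb M N k v t He), (eval_emb M N k v t0 He).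
    split; [apply (proj1 He) | intro E; rewrite E; reflexivity].
  - tauto.
  - specialize (IHf Hq v); tauto.
  - destruct Hq as [H1 H2]; specialize (IHf1 H1 v); specialize (IHf2 H2 v); tauto.
  - destruct Hq as [H1 H2]; specialize (IHf1 H1 v); specialize (IHf2 H2 v); tauto.
  - destruct Hq as [H1 H2]; specialize (IHf1 H1 v); specialize (IHf2 H2 v); tauto.
  - destruct Hq.
  - destruct Hq.
Qed.

Lemma upd_comp (M N : algebra) (k : M -> N) (v : nat -> M) m a :
  update (fun j => k (v j)) m (k a) = (fun j => k (update v m a j)).
Proof.
  apply functional_extensionality; intro x; unfold update; destruct (Nat.eqb x m); reflexivity.
Qed.

Lemma E_up (M N : algebra) (k : M -> N) : emb M N k ->
  forall f, is_E f -> forall v, sat M v f -> sat N (fun j => k (v j)) f.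
Proof.
  intros He f Hf; induction Hf; intros v Hs.
  - apply (proj2 (qf_emb M N k He f H v)); exact Hs.
  - simpl in *. destruct Hs as [a Ha]. exists (k a). rewrite upd_comp. apply IHHf; exact Ha.
Qed.

Definition covers (M N : algebra) (i : M -> N) : Prop :=
  forall (p : nat -> M) (q : nat -> N) (n : nat), exists k, emb M N k /\
    exists u : nat -> M, (forall j, j < n -> k (p j) = i (p j)) /\
                         (forall j, j < n -> k (u j) = q j).

Lemma AE_tr (M N : algebra) (i : M -> N) (cover : covers M N i) :
  forall f, is_AE f -> forall n, fbound f <= n -> forall (Z : nat -> Prop) (v : nat -> M),
  (forall v', (forall j, ~ Z j -> v' j = v j) -> sat M v' f) ->
  forall w, (forall j, j < n -> ~ Z j -> w j = i (v j)) -> sat N w f.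
Proof.
  intros f Hf; induction Hf as [f Hf | m f Hf IH]; intros n Hn Z v Hv w Hw.
  - destruct (cover v w n) as [k [Hk [u [H1 H2]]]].
    set (u' := fun j => if j <? n then u j else v j).
    assert (Hu' : sat M u' f).
    { apply Hv. intros j Hj. unfold u'. destruct (Nat.ltb_spec j n) as [Hl|Hl]; [|reflexivity].
      apply (proj1 Hk). rewrite H2 by exact Hl. rewrite (H1 j Hl). apply Hw; assumption. }
    pose proof (E_up M N k Hk f Hf u' Hu') as HN.
    refine (proj1 (sat_agree N f (fun j => k (u' j)) w _) HN).
    intros j Hj. pose proof (free_bound f j Hj). unfold u'.
    assert (E : (j <? n) = true) by (apply Nat.ltb_lt; lia). rewrite E. apply H2; lia.
  - cbn [sat]. intro b. cbn [fbound] in Hn. apply (IH n ltac:(lia) (fun j => Z j \/ j = m) v).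
    + intros v'' Hv''. specialize (Hv (update v'' m (v m))).
      assert (Hag : forall j, ~ Z j -> update v'' m (v m) j = v j).
      { intros j Hj. unfold update. destruct (Nat.eqb_spec j m) as [->|Hne]; [reflexivity|].
        apply Hv''; tauto. }
      specialize (Hv Hag). simpl in Hv. specialize (Hv (v'' m)).
      replace (update (update v'' m (v m)) m (v'' m)) with v'' in Hv; [exact Hv|].
      apply functional_extensionality; intro j; unfold update.
      destruct (Nat.eqb_spec j m) as [->|]; reflexivity.
    + intros j Hj HZ. unfold update. destruct (Nat.eqb_spec j m) as [->|Hne].
      * exfalso; apply HZ; right; reflexivity.
      * apply Hw; [exact Hj | tauto].
Qed.

Lemma EAE_tr (M N : algebra) (i : M -> N) (cover : covers M N i) :
  forall f, is_EAE f -> forall n, fbound f <= n -> forall v, sat M v f ->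
  forall w, (forall j, j < n -> w j = i (v j)) -> sat N w f.
Proof.
  intros f Hf; induction Hf as [f Hf | m f Hf IH]; intros n Hn v Hv w Hw.
  - apply (AE_tr M N i cover f Hf n Hn (fun _ => False) v).
    + intros v' Hv'. replace v' with v; [exact Hv|].
      apply functional_extensionality; intro j; symmetry; apply Hv'; tauto.
    + intros j Hj _; apply Hw; exact Hj.
  - simpl in Hv |- *. destruct Hv as [a Ha]. exists (i a). cbn [fbound] in Hn.
    apply (IH n ltac:(lia) (update v m a) Ha). intros j Hj. unfold update.
    destruct (j =? m); [reflexivity | apply Hw; exact Hj].
Qed.

Lemma transfer (M N : algebra) (i : M -> N) (cover : covers M N i) (f : formula) :
  inhabited M -> sentence f -> is_EAE f -> models M f -> models N f.
Proof.
  intros [a0] Hs He Hm w.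
  assert (H := EAE_tr M N i cover f He (fbound f) (le_n _) (fun _ => a0) (Hm _)
                 (fun _ => i a0) (fun _ _ => eq_refl)).
  apply (proj1 (sat_agree N f (fun _ => i a0) w (fun j Hj => False_ind _ (Hs j Hj)))). exact H.
Qed.

Definition sbin {T : Type} (b : binop) (f g : T -> Prop) : T -> Prop :=
  match b with
  | Antidom => fun x => g x /\ ~ f x
  | Comp => fun x => f x /\ g x
  | Meet => fun x => f x /\ g x
  | Upd => f
  | Pref => fun x => f x \/ g x
  end.

Definition sun {T : Type} (u : unop) (f : T -> Prop) : T -> Prop :=
  match u with
  | Dom => f
  | Antid => fun x => ~ f x
  end.

Definition SA (T : Type) (good : (T -> Prop) -> Prop)
  (Hb : forall b f g, good f -> good g -> good (sbin b f g))
  (Hu : forall u f, good f -> good (sun u f)) : algebra :=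
  {| carrier := {f : T -> Prop | good f};
     bin := fun b a c => exist _ (sbin b (proj1_sig a) (proj1_sig c))
                              (Hb b _ _ (proj2_sig a) (proj2_sig c));
     un := fun u a => exist _ (sun u (proj1_sig a)) (Hu u _ (proj2_sig a)) |}.

Lemma sig_ext {T : Type} {good : (T -> Prop) -> Prop} (a b : {f : T -> Prop | good f}) :
  (forall z, proj1_sig a z <-> proj1_sig b z) -> a = b.
Proof.
  destruct a as [a Ha], b as [b Hb]; simpl; intro H.
  assert (a = b) by (apply functional_extensionality; intro z; apply propositional_extensionality; apply H).
  subst. f_equal. apply proof_irrelevance.
Qed.

Lemma alg_le_SA T good Hb Hu (a b : {f : T -> Prop | good f}) :
  alg_le (SA T good Hb Hu) a b <-> (forall z, proj1_sig a z -> proj1_sig b z).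
Proof.
  unfold alg_le; split.
  - intros E z Hz. assert (P := f_equal (fun c => proj1_sig c z) E). simpl in P.
    rewrite <- P in Hz. tauto.
  - intro H. apply sig_ext. intro z. simpl. specialize (H z).
    destruct (classic (proj1_sig a z)); tauto.
Qed.

Definition goodM (Y : option nat -> Prop) : Prop :=
  exists n, forall x, n <= x -> (Y (Some x) <-> Y None).

Lemma goodM_bin : forall b f g, goodM f -> goodM g -> goodM (sbin b f g).
Proof.
  intros b f g [n1 H1] [n2 H2]; exists (n1 + n2); intros x Hx.
  specialize (H1 x ltac:(lia)); specialize (H2 x ltac:(lia)); destruct b; simpl; tauto.
Qed.

Lemma goodM_un : forall u f, goodM f -> goodM (sun u f).
Proof.
  intros u f [n1 H1]; exists n1; intros x Hx.
  specialize (H1 x Hx); destruct u; simpl; tauto.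
Qed.

Definition Mset : algebra := SA (option nat) goodM goodM_bin goodM_un.

Definition PT := (nat + (nat -> bool))%type.

Definition goodN (U : PT -> Prop) : Prop :=
  (exists n, forall x, n <= x -> (U (inl x) <-> U (inl n))) /\
  (exists n, forall w w', (forall t, t < n -> w t = w' t) -> (U (inr w) <-> U (inr w'))).

Lemma goodN_bin : forall b f g, goodN f -> goodN g -> goodN (sbin b f g).
Proof.
  intros b f g [[a1 A1] [b1 B1]] [[a2 A2] [b2 B2]]; split.
  - exists (a1 + a2); intros x Hx.
    pose proof (A1 x ltac:(lia)); pose proof (A1 (a1+a2) ltac:(lia));
    pose proof (A2 x ltac:(lia)); pose proof (A2 (a1+a2) ltac:(lia)); destruct b; simpl; tauto.
  - exists (b1 + b2); intros w w' Hww.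
    assert (E1 : forall t, t < b1 -> w t = w' t) by (intros; apply Hww; lia).
    assert (E2 : forall t, t < b2 -> w t = w' t) by (intros; apply Hww; lia).
    pose proof (B1 w w' E1); pose proof (B2 w w' E2); destruct b; simpl; tauto.
Qed.

Lemma goodN_un : forall u f, goodN f -> goodN (sun u f).
Proof.
  intros u f [[a1 A1] [b1 B1]]; split.
  - exists a1; intros x Hx.
    pose proof (A1 x Hx); pose proof (A1 a1 (le_n _)); destruct u; simpl; tauto.
  - exists b1; intros w w' Hww. pose proof (B1 w w' Hww); destruct u; simpl; tauto.
Qed.

Definition Nset : algebra := SA PT goodN goodN_bin goodN_un.

Fixpoint code (J : nat) (w : nat -> bool) : nat :=
  match J with
  | 0 => 0
  | S J' => (if w 0 then 1 else 0) + 2 * code J' (fun t => w (S t))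
  end.

Fixpoint bits (t i : nat) : bool :=
  match i with
  | 0 => Nat.odd t
  | S i' => bits (Nat.div2 t) i'
  end.

Lemma code_lt : forall J w, code J w < 2 ^ J.
Proof.
  induction J; simpl; intros w; [lia|].
  specialize (IHJ (fun t => w (S t))). destruct (w 0); lia.
Qed.

Lemma code_ext : forall J w w', (forall t, t < J -> w t = w' t) -> code J w = code J w'.
Proof.
  induction J; simpl; intros w w' H; [reflexivity|].
  rewrite (H 0 ltac:(lia)).
  rewrite (IHJ (fun t => w (S t)) (fun t => w' (S t))); [reflexivity|].
  intros; apply H; lia.
Qed.

Lemma bits_code : forall J w t, t < J -> bits (code J w) t = w t.
Proof.
  induction J; intros w t Ht; [lia|].
  destruct t as [|t]; cbn [code bits].
  - rewrite Nat.odd_add_mul_2. destruct (w 0); reflexivity.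
  - assert (E : Nat.div2 ((if w 0 then 1 else 0) + 2 * code J (fun t => w (S t)))
                = code J (fun t => w (S t))).
    { destruct (w 0); [apply Nat.div2_succ_double | apply Nat.div2_double]. }
    rewrite E. apply (IHJ (fun t => w (S t))). lia.
Qed.

Lemma code_bits : forall J t, t < 2 ^ J -> code J (bits t) = t.
Proof.
  induction J; intros t Ht.
  - simpl in Ht; simpl; lia.
  - cbn [code]. change (fun i => bits t (S i)) with (bits (Nat.div2 t)).
    pose proof (Nat.div2_odd t) as Hd.
    rewrite (IHJ (Nat.div2 t)).
    + simpl bits. destruct (Nat.odd t); simpl in Hd; lia.
    + rewrite Nat.pow_succ_r' in Ht. destruct (Nat.odd t); simpl in Hd; lia.
Qed.
Definition r0 (z : PT) : option nat :=
  match z with inl x => Some x | inr _ => None end.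

Definition rJ (J : nat) (z : PT) : option nat :=
  match z with
  | inl x => Some (if x <? J then x else x + 2 ^ J)
  | inr w => Some (J + code J w)
  end.

Lemma pre_good0 : forall Y, goodM Y -> goodN (fun z => Y (r0 z)).
Proof.
  intros Y [n H]; split.
  - exists n; intros x Hx; simpl. pose proof (H x Hx); pose proof (H n (le_n n)); tauto.
  - exists 0; intros; simpl; tauto.
Qed.

Lemma pre_goodJ J : forall Y, goodM Y -> goodN (fun z => Y (rJ J z)).
Proof.
  intros Y [n H]; split.
  - exists (n + J). intros x Hx. simpl.
    assert (E1: (x <? J) = false) by (apply Nat.ltb_ge; lia).
    assert (E2: (n + J <? J) = false) by (apply Nat.ltb_ge; lia).
    rewrite E1, E2.
    pose proof (H (x + 2^J) ltac:(lia)); pose proof (H (n + J + 2^J) ltac:(lia)); tauto.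
  - exists J. intros w w' Hww. simpl. rewrite (code_ext J w w' Hww). tauto.
Qed.

Definition preM (r : PT -> option nat) (Hr : forall Y, goodM Y -> goodN (fun z => Y (r z)))
  (Y : Mset) : Nset :=
  exist _ (fun z => proj1_sig Y (r z)) (Hr _ (proj2_sig Y)).

Lemma pre_hom r Hr :
  (forall o a b, preM r Hr (bin Mset o a b) = bin Nset o (preM r Hr a) (preM r Hr b)) /\
  (forall o a, preM r Hr (un Mset o a) = un Nset o (preM r Hr a)).
Proof.
  split; intros; apply sig_ext; intro z; destruct o; simpl; tauto.
Qed.

Definition iM : Mset -> Nset := preM r0 pre_good0.

Definition invf (J : nat) (U : PT -> Prop) : option nat -> Prop :=
  fun y => match y with
  | Some y => if y <? J then U (inl y)
              else if y <? J + 2 ^ J then U (inr (bits (y - J)))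
              else U (inl (y - 2 ^ J))
  | None => exists n, forall x, n <= x -> U (inl x)
  end.

Lemma inv_good : forall J U, goodN U -> goodM (invf J U).
Proof.
  intros J U [[n H] _]. exists (n + J + 2^J). intros y Hy. simpl.
  rewrite (proj2 (Nat.ltb_ge y J) ltac:(lia)), (proj2 (Nat.ltb_ge y (J + 2^J)) ltac:(lia)).
  split.
  - intro Hu. exists n. intros x Hx. pose proof (H x Hx). pose proof (H (y - 2^J) ltac:(lia)). tauto.
  - intros [m Hm]. pose proof (Hm (m + n) ltac:(lia)). pose proof (H (m+n) ltac:(lia)).
    pose proof (H (y - 2^J) ltac:(lia)). tauto.
Qed.

Definition invN (J : nat) (U : Nset) : Mset :=
  exist _ (invf J (proj1_sig U)) (inv_good J _ (proj2_sig U)).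

Lemma inv_pre : forall J Y, invN J (preM (rJ J) (pre_goodJ J) Y) = Y.
Proof.
  intros J Y. apply sig_ext; intros [y|]; simpl.
  - unfold rJ. destruct (Nat.ltb_spec y J) as [Hl|Hl]; [tauto|].
    destruct (Nat.ltb_spec y (J + 2^J)) as [Hl2|Hl2].
    + rewrite code_bits by lia. replace (J + (y - J)) with y by lia. tauto.
    + rewrite (proj2 (Nat.ltb_ge (y - 2^J) J) ltac:(lia)).
      replace (y - 2^J + 2^J) with y by lia. tauto.
  - destruct (proj2_sig Y) as [n H]. unfold rJ. split.
    + intros [m Hm]. specialize (Hm (m + n + J) ltac:(lia)).
      rewrite (proj2 (Nat.ltb_ge (m + n + J) J) ltac:(lia)) in Hm.
      apply (H (m + n + J + 2^J) ltac:(lia)); exact Hm.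
    + intro HN. exists (n + J). intros x Hx.
      rewrite (proj2 (Nat.ltb_ge x J) ltac:(lia)).
      apply (H (x + 2^J) ltac:(lia)); exact HN.
Qed.

Lemma pre_inv : forall J (U : Nset),
  (forall w w', (forall t, t < J -> w t = w' t) -> (proj1_sig U (inr w) <-> proj1_sig U (inr w'))) ->
  preM (rJ J) (pre_goodJ J) (invN J U) = U.
Proof.
  intros J U HU. apply sig_ext; intros [x|w]; simpl; unfold rJ.
  - destruct (Nat.ltb_spec x J) as [Hl|Hl]; [rewrite (proj2 (Nat.ltb_lt x J) Hl); tauto|].
    rewrite (proj2 (Nat.ltb_ge (x + 2^J) J) ltac:(lia)).
    rewrite (proj2 (Nat.ltb_ge (x + 2^J) (J + 2^J)) ltac:(lia)).
    replace (x + 2^J - 2^J) with x by lia. tauto.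
  - pose proof (code_lt J w).
    rewrite (proj2 (Nat.ltb_ge (J + code J w) J) ltac:(lia)).
    rewrite (proj2 (Nat.ltb_lt (J + code J w) (J + 2^J)) ltac:(lia)).
    replace (J + code J w - J) with (code J w) by lia.
    apply HU. intros t Ht. apply bits_code; exact Ht.
Qed.

Lemma agree_i : forall J (Y : Mset),
  (forall x, J <= x -> (proj1_sig Y (Some x) <-> proj1_sig Y None)) ->
  preM (rJ J) (pre_goodJ J) Y = iM Y.
Proof.
  intros J Y H. apply sig_ext; intros [x|w]; simpl; unfold rJ, r0.
  - destruct (Nat.ltb_spec x J) as [Hl|Hl]; [tauto|].
    pose proof (H x Hl); pose proof (H (x + 2^J) ltac:(lia)); tauto.
  - apply H; lia.
Qed.

Lemma emb_J J : emb Mset Nset (preM (rJ J) (pre_goodJ J)).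
Proof.
  split; [|apply pre_hom].
  intros a b E. rewrite <- (inv_pre J a), <- (inv_pre J b), E. reflexivity.
Qed.

Lemma finite_bound (P : nat -> nat -> Prop) :
  (forall j B B', B <= B' -> P j B -> P j B') ->
  forall n, (forall j, j < n -> exists B, P j B) -> exists B, forall j, j < n -> P j B.
Proof.
  intros Hm n; induction n; intros H.
  - exists 0; intros; lia.
  - destruct IHn as [B1 H1]; [intros; apply H; lia|].
    destruct (H n ltac:(lia)) as [B2 H2]. exists (B1 + B2). intros j Hj.
    destruct (Nat.eq_dec j n) as [->|Hne].
    + apply (Hm n B2); [lia|auto].
    + apply (Hm j B1); [lia| apply H1; lia].
Qed.

Lemma cover_MN : covers Mset Nset iM.
Proof.
  intros p q n.
  destruct (finite_bound (fun j B =>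
     (forall x, B <= x -> (proj1_sig (p j) (Some x) <-> proj1_sig (p j) None)) /\
     (forall w w', (forall t, t < B -> w t = w' t) ->
          (proj1_sig (q j) (inr w) <-> proj1_sig (q j) (inr w'))))) with (n := n)
    as [B HB].
  - intros j B B' HBB [H1 H2]; split.
    + intros x Hx; apply H1; lia.
    + intros w w' Hw; apply H2; intros; apply Hw; lia.
  - intros j _. destruct (proj2_sig (p j)) as [a Ha]. destruct (proj2_sig (q j)) as [_ [b Hb]].
    exists (a + b); split.
    + intros x Hx; apply Ha; lia.
    + intros w w' Hw; apply Hb; intros; apply Hw; lia.
  - exists (preM (rJ B) (pre_goodJ B)). split; [apply emb_J|].
    exists (fun j => invN B (q j)). split; intros j Hj.
    + apply agree_i. apply (HB j Hj).
    + apply pre_inv. apply (HB j Hj).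
Qed.

Lemma emb_i : emb Mset Nset iM.
Proof.
  split; [|apply pre_hom].
  intros a b E. apply sig_ext. intros [x|].
  - assert (P := f_equal (fun c : Nset => proj1_sig c (inl x)) E). simpl in P. rewrite P; tauto.
  - destruct (proj2_sig a) as [n1 H1]; destruct (proj2_sig b) as [n2 H2].
    assert (P := f_equal (fun c : Nset => proj1_sig c (inl (n1 + n2))) E). simpl in P.
    pose proof (H1 (n1+n2) ltac:(lia)); pose proof (H2 (n1+n2) ltac:(lia)).
    rewrite P in *. tauto.
Qed.

Definition thM (Y : Mset) : prel nat := fun x y => x = y /\ proj1_sig Y (Some x).

Lemma rep_M s : representation s Mset nat thM.
Proof.
  split; [intros a x y z [<- _] [<- _]; reflexivity|]. split; [|split].
  - intros a b H. apply sig_ext. intros [x|].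
    + destruct (H x x) as [H1 H2]; split; intro Z.
      * exact (proj2 (H1 (conj eq_refl Z))).
      * exact (proj2 (H2 (conj eq_refl Z))).
    + destruct (proj2_sig a) as [n1 K1]; destruct (proj2_sig b) as [n2 K2].
      destruct (H (n1+n2) (n1+n2)) as [H1 H2].
      pose proof (K1 (n1+n2) ltac:(lia)) as Ka; pose proof (K2 (n1+n2) ltac:(lia)) as Kb.
      split; intro Z.
      * apply Kb. exact (proj2 (H1 (conj eq_refl (proj2 Ka Z)))).
      * apply Ka. exact (proj2 (H2 (conj eq_refl (proj2 Kb Z)))).
  - intros o a b _ x y. unfold thM, in_dom; destruct o; simpl.
    + split.
      * intros [<- [Hb Ha]]. split; [auto|]. intros [y0 [_ H]]; auto.
      * intros [[<- Hb] Hn]. split; [auto|]. split; [auto|]. intro Ha; apply Hn; exists x; auto.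
    + split.
      * intros [<- [Ha Hb]]. exists x; auto.
      * intros [y0 [[<- Ha] [<- Hb]]]; auto.
    + tauto.
    + destruct (classic (proj1_sig b (Some x))) as [Hb|Hb].
      * split.
        -- intros [<- Ha]. right. split; [auto|]. exists x; auto.
        -- intros [[[<- Ha] _]|[[<- _] [y0 [_ Ha]]]]; auto.
      * split.
        -- intros [<- Ha]. left. split; [auto|]. intros [y0 [_ H]]; auto.
        -- intros [[[<- Ha] _]|[[<- Hb'] _]]; [auto|contradiction].
    + destruct (classic (proj1_sig a (Some x))) as [Ha|Ha].
      * split.
        -- intros [<- _]. left; auto.
        -- intros [[<- _]|[[<- _] _]]; auto.
      * split.
        -- intros [<- [Ha'|Hb]]; [contradiction|]. right. split; [auto|]. intros [y0 [_ H]]; auto.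
        -- intros [[<- Ha']|[[<- Hb] _]]; auto.
  - intros o a _ x y. unfold thM, in_dom; destruct o; simpl.
    + split.
      * intros [<- Ha]. split; [auto|]. exists x; auto.
      * intros [<- [y0 [_ Ha]]]; auto.
    + split.
      * intros [<- Ha]. split; [auto|]. intros [y0 [_ H]]; auto.
      * intros [<- Hn]. split; [auto|]. intro H; apply Hn; exists x; auto.
Qed.

Lemma mc_M : meet_complete Mset nat thM.
Proof.
  intros S m [s0 Hs0] [Hlow Hgr] x y. unfold thM. split.
  - intros [<- Hm] s Hs. split; [auto|].
    exact (proj1 (alg_le_SA _ _ _ _ m s) (Hlow s Hs) (Some x) Hm).
  - intros Hall. destruct (Hall s0 Hs0) as [<- _]. split; [auto|].
    destruct (classic (proj1_sig m (Some x))) as [Hm|Hm]; [exact Hm|exfalso].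
    assert (gl : goodM (fun z => proj1_sig m z \/ z = Some x)).
    { destruct (proj2_sig m) as [n Hn]. exists (n + x + 1). intros x' Hx'.
      pose proof (Hn x' ltac:(lia)). split.
      - intros [H1|H1]; [left; tauto|]. injection H1; lia.
      - intros [H1|H1]; [left; tauto|discriminate]. }
    set (l := exist _ _ gl : Mset).
    assert (Hl : alg_le Mset l m).
    { apply Hgr. intros s Hs. apply (proj2 (alg_le_SA _ _ _ _ l s)). intros z [Hz| ->].
      - exact (proj1 (alg_le_SA _ _ _ _ m s) (Hlow s Hs) z Hz).
      - exact (proj2 (Hall s Hs)). }
    apply Hm. exact (proj1 (alg_le_SA _ _ _ _ l m) Hl (Some x) (or_intror eq_refl)).
Qed.

Definition eset (z : PT) : Prop := match z with inl _ => False | inr _ => True end.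
Lemma good_e : goodN eset.
Proof. split; exists 0; intros; simpl; tauto. Qed.
Definition zset (z : PT) : Prop := False.
Lemma good_z : goodN zset.
Proof. split; exists 0; intros; unfold zset; tauto. Qed.
Definition cset (n : nat) (b : bool) (z : PT) : Prop :=
  match z with inl _ => False | inr w => w n = b end.
Lemma good_c n b : goodN (cset n b).
Proof.
  split; [exists 0; intros; simpl; tauto|].
  exists (S n); intros w w' H; simpl; rewrite (H n ltac:(lia)); tauto.
Qed.

Lemma noN s : sig_bin s Antidom = true -> ~ has_meet_complete_rep s Nset.
Proof.
  intros Hs [X [th [[Hf [Hinj [Hbin _]]] Hmc]]].
  assert (HA : forall a b x y, th (bin Nset Antidom a b) x y <-> th b x y /\ ~ in_dom (th a) x)
    by (intros; apply (Hbin Antidom a b Hs)).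
  set (e := exist _ eset good_e : Nset).
  set (zero := exist _ zset good_z : Nset).
  assert (Hsub : forall (c d : Nset) x y, (forall z, proj1_sig c z -> proj1_sig d z) ->
                   th c x y -> th d x y).
  { intros c d x y Hcd Hc. pose proof (proj2 (alg_le_SA PT goodN goodN_bin goodN_un c d) Hcd) as E.
    unfold alg_le in E. rewrite <- E in Hc. apply HA in Hc. tauto. }
  assert (Ez : zero = bin Nset Antidom e e) by (apply sig_ext; intro z; simpl; unfold zset; tauto).
  assert (th0 : forall x y, ~ th zero x y).
  { intros x y H. rewrite Ez in H. apply HA in H. destruct H as [H1 H2]. apply H2. exists y; exact H1. }
  destruct (classic (exists x y, th e x y)) as [[x [y Hexy]]|Hn].
  2:{ assert (E : e = zero).
      { apply Hinj. intros x y; split; intro H.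
        - exfalso; apply Hn; eauto.
        - exfalso; eapply th0; eauto. }
      assert (P := f_equal (fun c : Nset => proj1_sig c (inr (fun _ => true))) E).
      simpl in P. unfold eset, zset in P. rewrite <- P. exact I. }
  apply (th0 x y).
  assert (Hglb : is_glb Nset (fun a => th a x y) zero).
  { split.
    - intros s0 _. apply alg_le_SA. intros z Hz. destruct Hz.
    - intros l Hl.
      assert (Hl' : forall s0, th s0 x y -> forall z, proj1_sig l z -> proj1_sig s0 z)
        by (intros s0 Hs0; apply (proj1 (alg_le_SA PT goodN goodN_bin goodN_un l s0)); apply Hl; exact Hs0).
      apply alg_le_SA. intros z Hz. exfalso.
      destruct z as [a|w].
      + exact (Hl' e Hexy (inl a) Hz).
      + destruct (proj2_sig l) as [_ [nl Hnl]].
        set (c := exist _ (cset nl (w nl)) (good_c nl (w nl)) : Nset).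
        destruct (classic (in_dom (th c) x)) as [[y' Hy']|Hnd].
        * assert (Hcy : th c x y).
          { assert (Hey' : th e x y') by (apply (Hsub c e x y'); [intros [] ; simpl; tauto | exact Hy']).
            rewrite (Hf e x y' y Hey' Hexy) in Hy'. exact Hy'. }
          set (w' := fun t => if t =? nl then negb (w nl) else w t).
          assert (Hw' : proj1_sig l (inr w')).
          { assert (Ag : forall t, t < nl -> w' t = w t).
            { intros t Ht. unfold w'. destruct (Nat.eqb_spec t nl); [lia|reflexivity]. }
            apply (proj2 (Hnl w' w Ag)); exact Hz. }
          pose proof (Hl' c Hcy (inr w') Hw') as Hc. simpl in Hc. unfold w' in Hc.
          rewrite Nat.eqb_refl in Hc. destruct (w nl); discriminate.
        * assert (Hce : th (bin Nset Antidom c e) x y) by (apply HA; split; assumption).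
          pose proof (Hl' _ Hce (inr w) Hz) as Hc. simpl in Hc. tauto. }
  apply (proj2 (Hmc (fun a => th a x y) zero (ex_intro _ e Hexy) Hglb x y)).
  intros; assumption.
Qed.

Lemma inhM : inhabited Mset.
Proof.
  constructor. refine (exist _ (fun _ => False) _). exists 0; intros; tauto.
Qed.

Lemma inhN : inhabited Nset.
Proof. constructor. exact (exist _ zset good_z). Qed.

Theorem proposition4p8 (s : signature) (Hs : sig_bin s Antidom = true) :
  ~ exists T : formula -> Prop,
      (forall f, T f -> sentence f /\ formula_in_sig s f /\ is_EAE f) /\
      (forall M : algebra, inhabited M ->
         ((forall f, T f -> models M f) <-> has_meet_complete_rep s M)).
Proof.
  intros [T [HT Hiff]].
  assert (HM : forall f, T f -> models Mset f).
  { apply (Hiff Mset inhM). exists nat, thM. split; [apply rep_M | apply mc_M]. }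
  apply (noN s Hs). apply (Hiff Nset inhN). intros f Hf.
  destruct (HT f Hf) as [Hsen [_ He]].
  exact (transfer Mset Nset iM cover_MN f inhM Hsen He (HM f Hf)).
Qed.
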